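(* Let $H[A,B]$ be a connected bipartite cubic graph, $a\in A$, $b\in B$. Then $(a,b)$ is not $\lambda$-matchable if and only if exactly one of the following holds: (i) there is a unique edge joining $a$ and $b$, and it belongs to some $2$-cut of $H$; or (ii) $a$ and $b$ are nonadjacent and there is a tight cut $\partial(X)$ with $a\in X^-$ and $b\in\overline{X}^-$.
   Context: Graphs are loopless but may have parallel edges. For a connected bipartite cubic graph $H[A,B]$, $a\in A$, $b\in B$, an $(a,b)$-matching is a spanning subgraph in which $a,b$ have degree $3$ and every other vertex degree $1$; $(a,b)$ is $\lambda$-matchable if one exists. A cut $C$ is tight if $|C\cap M|=1$ for every perfect matching $M$. For an odd cut $\partial(X)$ of $H[A,B]$, $X^+$ and $X^-$ are the larger and smaller of $X\cap A$ and $X\cap B$; $\overline{X}^+,\overline{X}^-$ are defined analogously for $\overline{X}=V(H)-X$. A $2$-cut is a cut with exactly two edges. *)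

(* Defs.v *)
(* Multigraphs (parallel edges allowed) on finite vertex
   type V and finite edge type E, each edge e having ends src e, tgt e. *)
From mathcomp Require Import all_boot.
Set Implicit Arguments. Unset Strict Implicit. Unset Printing Implicit Defensive.

Section Graphs.
Variables (V E : finType) (src tgt : E -> V).

Definition inc (e : E) (v : V) : bool := (src e == v) || (tgt e == v).

Definition joins (e : E) (u v : V) : bool :=
  ((src e == u) && (tgt e == v)) || ((src e == v) && (tgt e == u)).

(* degree of v in the spanning subgraph with edge set F (loopless graphs) *)
Definition deg (F : {set E}) (v : V) : nat := #|[set e in F | inc e v]|.

Definition loopless : Prop := forall e, src e != tgt e.

Definition adj (u v : V) : bool := [exists e, joins e u v].

Definition connected : Prop := forall u v, connect adj u v.

Definition cubic : Prop := forall v, deg setT v = 3.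

Definition bipartite_on (A : {set V}) : Prop :=
  forall e, (src e \in A) != (tgt e \in A).

Definition perfect_matching (M : {set E}) : Prop := forall v, deg M v = 1.

Definition ab_matching (a b : V) (F : {set E}) : Prop :=
  deg F a = 3 /\ deg F b = 3 /\ forall v, v != a -> v != b -> deg F v = 1.

Definition lambda_matchable (a b : V) : Prop := exists F, ab_matching a b F.

Definition cut (X : {set V}) : {set E} :=
  [set e | (src e \in X) != (tgt e \in X)].

Definition tight (C : {set E}) : Prop :=
  forall M, perfect_matching M -> #|C :&: M| = 1.

(* X^- : the smaller of X ∩ A and X ∩ B (B = ~: A); meaningful for odd X *)
Definition Xminus (A X : {set V}) : {set V} :=
  if #|X :&: A| < #|X :&: ~: A| then X :&: A else X :&: ~: A.

End Graphs.

(* Main.v *)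
Require Import Defs.
From mathcomp Require Import all_boot zify.
Set Implicit Arguments. Unset Strict Implicit. Unset Printing Implicit Defensive.
Lemma hall (T : finType) (r : rel T) n (L R : {set T}) :
  #|L| <= n ->
  (forall S : {set T}, S \subset L -> #|S| <= #|[set y in R | [exists x in S, r x y]]|) ->
  exists f : T -> T, (forall x, x \in L -> (f x \in R) && r x (f x)) /\ {in L &, injective f}.
Proof.
elim: n L R => [|n IH] L R hL hH.
  have L0 : L = set0 by apply/eqP; rewrite -cards_eq0 -leqn0.
  by exists id; split => [x|x y]; rewrite L0 inE.
set N := fun S : {set T} => [set y in R | [exists x in S, r x y]].
case: (boolP [exists S : {set T}, [&& S \subset L, S != set0, S != L & #|N S| <= #|S|]]).
- case/existsP => S0 /and4P [sS0 nS0 S0L tS0].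
  have pS0 : S0 \proper L by rewrite properEneq S0L sS0.
  have [f1 [Hf1 if1]] : exists f : T -> T, (forall x, x \in S0 -> (f x \in R) && r x (f x)) /\ {in S0 &, injective f}.
    apply: IH; first by have := proper_card pS0; lia.
    by move=> S sS; apply: hH; exact: subset_trans sS sS0.
  have [f2 [Hf2 if2]] : exists f : T -> T, (forall x, x \in L :\: S0 -> (f x \in R :\: N S0) && r x (f x)) /\ {in L :\: S0 &, injective f}.
    apply: IH.
      have := cardsID S0 L; rewrite (setIidPr sS0).
      have : 0 < #|S0| by rewrite card_gt0.
      lia.
    move=> S sS.
    have sSL : S \subset L by apply: subset_trans sS (subsetDl _ _).
    have dS : S :&: S0 = set0.
      apply/setP => x; rewrite !inE; apply/negP => /andP[xS xS0].
      by move/subsetP: sS => /(_ x xS); rewrite inE xS0.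
    have := hH (S :|: S0); rewrite subUset sSL sS0 => /(_ isT).
    rewrite cardsU dS cards0 subn0.
    have sub : N (S :|: S0) \subset N S0 :|: [set y in R :\: N S0 | [exists x in S, r x y]].
      apply/subsetP => y; rewrite !inE => /andP[yR /existsP[x /andP[]]].
      rewrite inE => /orP[xS rxy|xS0 rxy].
        case: (boolP ((y \in R) && [exists x in S0, r x y])) => h; first by apply/orP; left.
        by apply/orP; right; apply/andP; split; [apply/andP; split | apply/existsP; exists x; rewrite xS].
      by apply/orP; left; apply/andP; split => //; apply/existsP; exists x; rewrite xS0.
    have := subset_leq_card sub; rewrite cardsU.
    have : #|N S0| <= #|S0| by [].
    move=> h1 h2 h3; have h4 : #|S| + #|S0| <= #|N (S :|: S0)| := h3; clear h3; lia.
  exists (fun x => if x \in S0 then f1 x else f2 x); split.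
    move=> x xL; case: ifP => xS0; first exact: Hf1.
    have /andP[] := Hf2 x ltac:(by rewrite inE xS0 xL).
    by rewrite inE => /andP[_ ->].
  move=> x y xL yL /=.
  case: ifP => xS0; case: ifP => yS0.
  + by apply: if1.
  + move=> E; have /andP[] := Hf2 y ltac:(by rewrite inE yS0 yL).
    rewrite inE -E => /andP[/negP H] _ _; exfalso; apply: H.
    have /andP[Rx rx] := Hf1 x xS0.
    rewrite inE Rx /=; apply/existsP; exists x; by rewrite xS0.
  + move=> E; have /andP[] := Hf2 x ltac:(by rewrite inE xS0 xL).
    rewrite inE E => /andP[/negP H] _ _; exfalso; apply: H.
    have /andP[Ry ry] := Hf1 y yS0.
    rewrite inE Ry /=; apply/existsP; exists y; by rewrite yS0.
  + by apply: if2; rewrite inE ?xS0 ?yS0 ?xL ?yL.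
- move/existsPn => Hno.
  case: (set_0Vmem L) => [L0 | [x0 x0L]].
    by exists id; split => [x|x y]; rewrite L0 inE.
  have : 0 < #|N [set x0]|.
    by have := hH [set x0]; rewrite sub1set x0L cards1 => /(_ isT).
  case/card_gt0P => y0; rewrite inE => /andP[y0R /existsP[x1 /andP[/set1P -> rx0]]]; clear x1.
  have [f2 [Hf2 if2]] : exists f : T -> T, (forall x, x \in L :\ x0 -> (f x \in R :\ y0) && r x (f x)) /\ {in L :\ x0 &, injective f}.
    apply: IH.
      have := cardsD1 x0 L; rewrite x0L; lia.
    move=> S sS.
    case: (set_0Vmem S) => [-> | [z zS]]; first by rewrite cards0.
    have sSL : S \subset L by apply: subset_trans sS (subsetDl _ _).
    have x0S : x0 \notin S by apply/negP => /(subsetP sS); rewrite !inE eqxx.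
    have := Hno S; rewrite sSL /=.
    have -> : (S != set0) by apply/set0Pn; exists z.
    have -> : (S != L) by apply/negP => /eqP SL; move: x0S; rewrite SL x0L.
    rewrite /= -ltnNge => HS.
    have sub : N S \subset y0 |: [set y in R :\ y0 | [exists x in S, r x y]].
      apply/subsetP => y; rewrite !inE => /andP[yR Hx].
      by case: eqP => //= _; rewrite yR.
    have := subset_leq_card sub; rewrite cardsU1.
    lia.
  exists (fun x => if x == x0 then y0 else f2 x); split.
    move=> x xL; case: eqP => [->|nx]; first by rewrite y0R.
    have /andP[] := Hf2 x ltac:(by rewrite !inE xL andbT; apply/eqP).
    by rewrite inE => /andP[_ ->].
  move=> x y xL yL /=.
  case: eqP => [->|nx]; case: eqP => [->|ny] //.
  + move=> E; have /andP[] := Hf2 y ltac:(by rewrite !inE yL andbT; apply/eqP).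
    by rewrite -E !inE eqxx.
  + move=> E; have /andP[] := Hf2 x ltac:(by rewrite !inE xL andbT; apply/eqP).
    by rewrite E !inE eqxx.
  + by apply: if2; rewrite !inE ?xL ?yL andbT; apply/eqP.
Qed.

Section G.
Variables (V E : finType) (src tgt : E -> V) (A : {set V}).
Hypothesis Hbip : bipartite_on src tgt A.

Definition eA e := if src e \in A then src e else tgt e.
Definition eB e := if src e \in A then tgt e else src e.

Lemma eA_in e : eA e \in A.
Proof. rewrite /eA; have := Hbip e; case sA: (src e \in A) => //; by case: (tgt e \in A). Qed.
Lemma eB_out e : eB e \notin A.
Proof. rewrite /eB; have := Hbip e; case sA: (src e \in A) => //; by rewrite sA. Qed.

Lemma ends e : ((src e == eA e) && (tgt e == eB e)) || ((src e == eB e) && (tgt e == eA e)).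
Proof. by rewrite /eA /eB; case: (src e \in A); rewrite !eqxx ?orbT. Qed.

Lemma inc_E e v : inc src tgt e v = (eA e == v) || (eB e == v).
Proof. by case/orP: (ends e) => /andP[/eqP E1 /eqP E2]; rewrite /inc E1 E2 // orbC. Qed.

Lemma joins_E e x y : joins src tgt e x y =
  ((eA e == x) && (eB e == y)) || ((eB e == x) && (eA e == y)).
Proof. case/orP: (ends e) => /andP[/eqP E1 /eqP E2]; rewrite /joins E1 E2;
  by case: (eA e == x); case: (eB e == y); case: (eA e == y); case: (eB e == x). Qed.

Lemma neq_AB x y : x \in A -> y \notin A -> (y == x) = false.
Proof. by move=> xA yA; apply/eqP => E'; rewrite E' xA in yA. Qed.

Lemma inc_A e v : v \in A -> inc src tgt e v = (eA e == v).
Proof. by move=> vA; rewrite inc_E (neq_AB vA (eB_out e)) orbF. Qed.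

Lemma inc_B e v : v \notin A -> inc src tgt e v = (eB e == v).
Proof. by move=> vA; rewrite inc_E eq_sym (neq_AB (eA_in e) vA). Qed.

Lemma joins_AB e x y : x \in A -> y \notin A ->
  joins src tgt e x y = (eA e == x) && (eB e == y).
Proof. by move=> xA yA; rewrite joins_E (neq_AB xA (eB_out e)) orbF. Qed.

Lemma joinsC e x y : joins src tgt e x y = joins src tgt e y x.
Proof. by rewrite /joins orbC. Qed.

Lemma adjC x y : adj src tgt x y = adj src tgt y x.
Proof. by apply/existsP/existsP => -[e He]; exists e; rewrite joinsC. Qed.

Lemma adj_AB x y : x \in A -> adj src tgt x y -> y \notin A.
Proof.
move=> xA /existsP[e]; rewrite joins_E (neq_AB xA (eB_out e)) andFb orbF.
by case/andP=> _ /eqP <-; exact: eB_out.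
Qed.

Lemma cut_AB (X : {set V}) e : (e \in cut src tgt X) = ((eA e \in X) != (eB e \in X)).
Proof. by rewrite inE /eA /eB; case: ifP => //; rewrite eq_sym. Qed.

Lemma cutC (X : {set V}) : cut src tgt (~: X) = cut src tgt X.
Proof. apply/setP => e; rewrite !inE; by case: (src e \in X); case: (tgt e \in X). Qed.

Lemma degA (F : {set E}) v : v \in A -> deg src tgt F v = #|[set e in F | eA e == v]|.
Proof. by move=> vA; rewrite /deg; apply: eq_card => e; rewrite !inE inc_A. Qed.

Lemma degB (F : {set E}) v : v \notin A -> deg src tgt F v = #|[set e in F | eB e == v]|.
Proof. by move=> vA; rewrite /deg; apply: eq_card => e; rewrite !inE inc_B. Qed.

Lemma cardP (P : {set E}) (g : E -> V) (Y : {set V}) :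
  #|[set e in P | g e \in Y]| = \sum_(y in Y) #|[set e in P | g e == y]|.
Proof.
rewrite -sum1_card (partition_big g (mem Y)) /=; last by move=> e; rewrite inE => /andP[].
apply: eq_bigr => y yY; rewrite -sum1_card; apply: eq_bigl => e; rewrite !inE.
case: (e \in P) => //=; case: (g e =P y) => [->|]; by rewrite ?yY ?andbF.
Qed.

Lemma sumA (F : {set E}) (X : {set V}) : #|[set e in F | eA e \in X]| = \sum_(v in X :&: A) deg src tgt F v.
Proof.
rewrite (eq_card (B := [set e in F | eA e \in X :&: A])); last first.
  by move=> e; rewrite !inE eA_in andbT.
rewrite cardP; apply: eq_bigr => v; rewrite inE => /andP[_ vA]; by rewrite degA.
Qed.

Lemma sumB (F : {set E}) (X : {set V}) : #|[set e in F | eB e \in X]| = \sum_(v in X :&: ~: A) deg src tgt F v.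
Proof.
rewrite (eq_card (B := [set e in F | eB e \in X :&: ~: A])); last first.
  by move=> e; rewrite !inE eB_out andbT.
rewrite cardP; apply: eq_bigr => v; rewrite !inE => /andP[_ vA]; by rewrite degB.
Qed.

Lemma sum_const (X : {set V}) (F : {set E}) c :
  (forall v, v \in X -> deg src tgt F v = c) -> \sum_(v in X) deg src tgt F v = c * #|X|.
Proof. by move=> H; rewrite (eq_bigr (fun _ => c)) // sum_nat_const mulnC. Qed.

Definition IN (F : {set E}) (X : {set V}) := [set e in F | (eA e \in X) && (eB e \in X)].
Definition T1 (F : {set E}) (X : {set V}) := [set e in F | (eA e \in X) && (eB e \notin X)].
Definition T2 (F : {set E}) (X : {set V}) := [set e in F | (eB e \in X) && (eA e \notin X)].

Lemma cntA (F : {set E}) (X : {set V}) : #|[set e in F | eA e \in X]| = #|IN F X| + #|T1 F X|.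
Proof.
rewrite -(cardsID [set e | eB e \in X] [set e in F | eA e \in X]).
congr (_ + _); apply: eq_card => e; rewrite /IN /T1 /T2 !inE;
  by case: (e \in F); case: (eA e \in X); case: (eB e \in X).
Qed.

Lemma cntB (F : {set E}) (X : {set V}) : #|[set e in F | eB e \in X]| = #|IN F X| + #|T2 F X|.
Proof.
rewrite -(cardsID [set e | eA e \in X] [set e in F | eB e \in X]).
congr (_ + _); apply: eq_card => e; rewrite /IN /T1 /T2 !inE;
  by case: (e \in F); case: (eA e \in X); case: (eB e \in X).
Qed.

Lemma cntcut (F : {set E}) (X : {set V}) : #|F :&: cut src tgt X| = #|T1 F X| + #|T2 F X|.
Proof.
rewrite -(cardsID [set e | eA e \in X] (F :&: cut src tgt X)).
congr (_ + _); apply: eq_card => e; rewrite ?in_setD !in_setI cut_AB /IN /T1 /T2 !inE;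
  by case: (e \in F); case: (eA e \in X); case: (eB e \in X).
Qed.

Lemma T1S (F G : {set E}) (X : {set V}) : F \subset G -> #|T1 F X| <= #|T1 G X|.
Proof.
move=> sFG; apply: subset_leq_card; apply/subsetP => e; rewrite !inE => /andP[/(subsetP sFG) -> ->]; done.
Qed.


Hypothesis Hcub : cubic src tgt.

Lemma sumT_A (X : {set V}) : #|[set e in [set: E] | eA e \in X]| = 3 * #|X :&: A|.
Proof. by rewrite sumA (sum_const (c := 3)). Qed.

Lemma sumT_B (X : {set V}) : #|[set e in [set: E] | eB e \in X]| = 3 * #|X :&: ~: A|.
Proof. by rewrite sumB (sum_const (c := 3)). Qed.

Lemma cardAB : #|A| = #|~: A|.
Proof.
have := sumT_A setT; have := sumT_B setT; rewrite !setTI.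
have -> : #|[set e in [set: E] | eA e \in [set: V]]| = #|[set e in [set: E] | eB e \in [set: V]]|.
  by apply: eq_card => e; rewrite !inE.
lia.
Qed.

Lemma build (L R : {set V}) (f : V -> V) :
  L \subset A -> R \subset ~: A -> #|R| <= #|L| ->
  (forall x, x \in L -> (f x \in R) && adj src tgt x (f x)) -> {in L &, injective f} ->
  exists M1 : {set E}, (forall e, e \in M1 -> (eA e \in L) && (eB e \in R)) /\
    (forall v, v \in L -> #|[set e in M1 | eA e == v]| = 1) /\
    (forall v, v \in R -> #|[set e in M1 | eB e == v]| = 1).
Proof.
move=> sLA sRB cRL Hf injf.
pose pk x := [pick e | joins src tgt e x (f x)].
have Hpk : forall x, x \in L -> exists2 e, pk x = Some e & (eA e == x) && (eB e == f x).
  move=> x xL; have /andP[fR /existsP[e0 He0]] := Hf x xL.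
  rewrite /pk; case: pickP => [e He|H]; last by have := H e0; rewrite He0.
  exists e => //; rewrite -joins_AB //; first exact: (subsetP sLA).
  by have := subsetP sRB _ fR; rewrite inE.
exists [set e | (eA e \in L) && (pk (eA e) == Some e)]; split; [|split].
- move=> e; rewrite inE => /andP[eL /eqP pe]; rewrite eL /=.
  have [e' pe' /andP[_ /eqP eb]] := Hpk _ eL.
  move: pe'; rewrite pe => -[E']; subst e'.
  by rewrite eb; have /andP[] := Hf _ eL.
- move=> v vL; apply/eqP/cards1P; have [e pe /andP[/eqP ea eb]] := Hpk _ vL.
  exists e; apply/setP => e'; rewrite !inE.
  apply/idP/idP => [/andP[/andP[_ /eqP pe'] /eqP ea']|/eqP ->].
    by move: pe'; rewrite ea' pe => -[->].
  by rewrite ea vL /= pe !eqxx.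
- move=> v vR.
  have imR : [set f x | x in L] = R.
    apply/eqP; rewrite eqEcard card_in_imset // cRL andbT.
    by apply/subsetP => y /imsetP[x xL ->]; have /andP[] := Hf x xL.
  move: vR; rewrite -imR => /imsetP[x xL ->].
  apply/eqP/cards1P; have [e pe /andP[/eqP ea /eqP eb]] := Hpk _ xL.
  exists e; apply/setP => e'; rewrite !inE.
  apply/idP/idP => [/andP[/andP[eL' /eqP pe'] /eqP eb']|/eqP ->]; last by rewrite ea xL pe eb !eqxx.
  have [e'' pe'' /andP[_ /eqP eb'']] := Hpk _ eL'.
  move: pe''; rewrite pe' => -[E']; subst e''.
  have xx : eA e' = x by apply: injf => //; rewrite -eb'' eb'.
  by move: pe'; rewrite xx pe => -[->].
Qed.


Lemma pm_edge g : exists M, perfect_matching src tgt M /\ g \in M.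
Proof.
pose L := A :\ eA g. pose R := ~: A :\ eB g.
have sLA : L \subset A by apply: subsetDl.
have sRB : R \subset ~: A by apply: subsetDl.
have [f [Hf injf]] : exists f : V -> V, (forall x, x \in L -> (f x \in R) && adj src tgt x (f x)) /\ {in L &, injective f}.
  apply: (@hall V (fun x y => adj src tgt x y) #|L|) => // S sS.
  set NS := [set y in R | [exists x in S, adj src tgt x y]].
  have sub : [set e in [set: E] | eA e \in S] \subset
     [set e in [set: E] | eB e \in NS] :|: ([set e in [set: E] | eB e == eB g] :\ g).
    apply/subsetP => e; rewrite !inE /= => eS.
    case: (eB e =P eB g) => [->|ne].
      apply/orP; right; rewrite andbT; apply/eqP => E'; subst e.
      by move/subsetP: sS => /(_ _ eS); rewrite !inE; case/andP => /eqP; case.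
    apply/orP; left; rewrite eB_out /=.
    apply/existsP; exists (eA e); rewrite eS /=; apply/existsP; exists e.
    by rewrite joins_AB ?eqxx ?eA_in ?eB_out.
  have c1 := sumT_A S; have c2 := sumT_B NS.
  have c3 : #|[set e in [set: E] | eB e == eB g]| = 3 by rewrite -degB ?eB_out //; apply: Hcub.
  have c4 := cardsD1 g [set e in [set: E] | eB e == eB g]; rewrite !inE eqxx /= in c4.
  have e1 : S :&: A = S by apply/setIidPl; apply: subset_trans sS sLA.
  have e2 : NS :&: ~: A = NS.
    apply/setIidPl; apply: subset_trans sRB; apply/subsetP => y; rewrite inE => /andP[].
    done.
  rewrite e1 in c1; rewrite e2 in c2.
  have := subset_leq_card sub; rewrite cardsU. lia.
have cRL : #|R| <= #|L|.
  have := cardsD1 (eA g) A; have := cardsD1 (eB g) (~: A); rewrite eA_in !inE eB_out -cardAB.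
  rewrite /L /R; lia.
have [M1 [HM1 [HL HR]]] := build sLA sRB cRL Hf injf.
exists (g |: M1); split; last by rewrite !inE eqxx.
move=> v; case vA: (v \in A).
  rewrite degA //; case: (v =P eA g) => [->|nv].
    apply/eqP/cards1P; exists g; apply/setP => e; rewrite !inE.
    apply/idP/idP => [/andP[/orP[//|eM] /eqP ea]|/eqP ->]; last by rewrite !eqxx.
    by have /andP[] := HM1 e eM; rewrite ea !inE eqxx.
  rewrite -(HL v); last by rewrite !inE vA andbT; apply/eqP.
  apply: eq_card => e; rewrite !inE.
  by case: (e =P g) => [->|] //=; case: (eA g =P v) => [E'|]; [case: nv | rewrite andbF].
rewrite degB ?vA //; case: (v =P eB g) => [->|nv].
  apply/eqP/cards1P; exists g; apply/setP => e; rewrite !inE.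
  apply/idP/idP => [/andP[/orP[//|eM] /eqP ea]|/eqP ->]; last by rewrite !eqxx.
  by have /andP[_] := HM1 e eM; rewrite ea !inE eqxx.
rewrite -(HR v); last by rewrite !inE vA andbT; apply/eqP.
apply: eq_card => e; rewrite !inE.
by case: (e =P g) => [->|] //=; case: (eB g =P v) => [E'|]; [case: nv | rewrite andbF].
Qed.


Lemma sumPM_A (M : {set E}) (X : {set V}) : perfect_matching src tgt M ->
  #|[set e in M | eA e \in X]| = #|X :&: A|.
Proof. by move=> HM; rewrite sumA (sum_const (c := 1)) ?mul1n. Qed.

Lemma sumPM_B (M : {set E}) (X : {set V}) : perfect_matching src tgt M ->
  #|[set e in M | eB e \in X]| = #|X :&: ~: A|.
Proof. by move=> HM; rewrite sumB (sum_const (c := 1)) ?mul1n. Qed.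

Lemma sumF_A a b (F : {set E}) (X : {set V}) : a \in A -> b \notin A -> ab_matching src tgt a b F ->
  a \in X -> #|[set e in F | eA e \in X]| = #|X :&: A| + 2.
Proof.
move=> aA bA [Fa [Fb Fv]] aX.
have aXA : a \in X :&: A by rewrite inE aX aA.
rewrite sumA (big_setD1 _ aXA) /= Fa (sum_const (c := 1)) ?mul1n.
  by rewrite (cardsD1 a (X :&: A)) aXA; lia.
move=> v; rewrite !inE => /andP[va /andP[_ vA]]; apply: Fv => //.
by apply/eqP => E'; move: bA; rewrite -E' vA.
Qed.

Lemma sumF_B a b (F : {set E}) (X : {set V}) : a \in A -> b \notin A -> ab_matching src tgt a b F ->
  b \notin X -> #|[set e in F | eB e \in X]| = #|X :&: ~: A|.
Proof.
move=> aA bA [Fa [Fb Fv]] bX.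
rewrite sumB (sum_const (c := 1)) ?mul1n //.
move=> v; rewrite !inE => /andP[vX vA]; apply: Fv.
  by apply/eqP => E'; move: vA; rewrite E' aA.
by apply/eqP => E'; move: bX; rewrite -E' vX.
Qed.

Lemma some_edge (a : V) : exists e : E, True.
Proof.
have : 0 < deg src tgt [set: E] a by rewrite Hcub.
by case/card_gt0P => e _; exists e.
Qed.


Lemma tight_delta (X : {set V}) : tight src tgt (cut src tgt X) ->
  #|X :&: A| < #|X :&: ~: A| -> #|X :&: ~: A| = #|X :&: A| + 1.
Proof.
move=> Ht lt.
have : 0 < #|X :&: ~: A| by lia.
case/card_gt0P => v _; have [e0 _] := some_edge v; have [M [HM _]] := pm_edge e0.
have := Ht M HM; rewrite setIC cntcut.
have := cntA M X; have := cntB M X; rewrite (sumPM_A _ HM) (sumPM_B _ HM).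
lia.
Qed.

Lemma fwd2 a b (F : {set E}) (X : {set V}) : a \in A -> b \notin A ->
  ab_matching src tgt a b F -> tight src tgt (cut src tgt X) -> a \in X -> b \notin X ->
  #|X :&: A| < #|X :&: ~: A| -> False.
Proof.
move=> aA bA HF Ht aX bX lt.
have d := tight_delta Ht lt.
have f1 := cntA F X; have f2 := cntB F X.
rewrite (sumF_A aA bA HF aX) in f1; rewrite (sumF_B aA bA HF bX) in f2.
have : 0 < #|T1 F X| by lia.
case/card_gt0P => g gT.
have [M [HM gM]] := pm_edge g.
have := Ht M HM; rewrite setIC cntcut.
have : 0 < #|T1 M X|.
  by apply/card_gt0P; exists g; move: gT; rewrite /T1 !inE gM => /andP[_ ->].
have := cntA M X; have := cntB M X; rewrite (sumPM_A _ HM) (sumPM_B _ HM).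
lia.
Qed.

Lemma fwd1 a b (F : {set E}) e (X : {set V}) : a \in A -> b \notin A ->
  ab_matching src tgt a b F -> joins src tgt e a b -> #|cut src tgt X| = 2 ->
  e \in cut src tgt X -> False.
Proof.
move=> aA bA HF He cX eX.
rewrite joins_AB // in He; case/andP: He => /eqP ea /eqP eb.
have [Y [aY [bY [cY eY]]]] : exists Y : {set V}, a \in Y /\ b \notin Y /\ #|cut src tgt Y| = 2 /\ e \in cut src tgt Y.
  move: (eX); rewrite cut_AB ea eb; case aX: (a \in X) => /= bX.
    by exists X.
  exists (~: X); rewrite cutC; split; first by rewrite inE aX.
  by split; first by move: bX; rewrite inE; case: (b \in X).
have c1 := cntA [set: E] Y; have c2 := cntB [set: E] Y; have c3 := cntcut [set: E] Y.
rewrite sumT_A in c1; rewrite sumT_B in c2; rewrite setTI cY in c3.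
have : 0 < #|T1 [set: E] Y|.
  by apply/card_gt0P; exists e; rewrite /T1 !inE ea eb aY bY.
have f1 := cntA F Y; have f2 := cntB F Y.
rewrite (sumF_A aA bA HF aY) in f1; rewrite (sumF_B aA bA HF bY) in f2.
have := T1S Y (subsetT F).
lia.
Qed.


Definition P1 a b := exists e, joins src tgt e a b /\ (forall e', joins src tgt e' a b -> e' = e) /\
  exists X : {set V}, #|cut src tgt X| = 2 /\ e \in cut src tgt X.

Definition P2 a b := (forall e, ~~ joins src tgt e a b) /\ exists X : {set V},
  tight src tgt (cut src tgt X) /\ a \in X /\ b \notin X /\
  #|X :&: A| < #|X :&: ~: A| /\ #|~: X :&: ~: A| < #|~: X :&: A|.

Lemma cardsIC (X Y : {set V}) : #|X :&: Y| + #|~: X :&: Y| = #|Y|.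
Proof. by rewrite -(cardsID X Y) setDE [Y :&: X]setIC [Y :&: ~: X]setIC. Qed.

Lemma conn_cut (X : {set V}) u v : connected src tgt -> #|cut src tgt X| = 0 ->
  u \in X -> v \notin X -> False.
Proof.
move=> Hc c0 uX vX.
have c0' : cut src tgt X = set0 by apply/eqP; rewrite -cards_eq0 c0.
have Hcl : closed (adj src tgt) (mem X).
  move=> x y /existsP[e He].
  have : e \notin cut src tgt X by rewrite c0' inE.
  rewrite inE negbK => /eqP.
  by case/orP: He => /andP[/eqP -> /eqP ->].
by have := closed_connect Hcl (Hc u v) => /= H; move: vX; rewrite -H uX.
Qed.

Lemma cutlem a b (X : {set V}) : connected src tgt -> a \in A -> b \notin A ->
  a \in X -> b \notin X ->
  (forall e, eA e \in X -> eB e \notin X -> (eA e == a) && (eB e == b)) ->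
  #|X :&: ~: A| + #|[set e | joins src tgt e a b]| <= #|X :&: A| + 1 ->
  P1 a b \/ P2 a b.
Proof.
move=> Hc aA bA aX bX He Hsz.
have T1k : T1 [set: E] X = [set e | joins src tgt e a b].
  apply/setP => e; rewrite /T1 !inE joins_AB //.
  apply/idP/idP => [/and3P[_ eX eX']|/andP[/eqP ea /eqP eb]]; first exact: He.
  by rewrite ea eb aX bX.
have c1 := cntA [set: E] X; have c2 := cntB [set: E] X; have c3 := cntcut [set: E] X.
rewrite sumT_A in c1; rewrite sumT_B in c2; rewrite setTI in c3.
rewrite T1k in c1 c3.
have : (#|[set e | joins src tgt e a b]| = 1 /\ #|T2 [set: E] X| = 1) \/
       (#|[set e | joins src tgt e a b]| = 0 /\ #|T2 [set: E] X| = 0) \/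
       (#|[set e | joins src tgt e a b]| = 0 /\ #|X :&: ~: A| = #|X :&: A| + 1) by lia.
case=> [[k1 t1]|[[k0 t0]|[k0 d1]]].
- left; move/eqP/cards1P: k1 => [e He1].
  have Hje : joins src tgt e a b by have := set11 e; rewrite -He1 inE.
  exists e; split => //; split.
    by move=> e' Hj; apply/set1P; rewrite -He1 inE.
  exists X; split; first lia.
  by move: Hje; rewrite joins_AB // cut_AB => /andP[/eqP -> /eqP ->]; rewrite aX (negbTE bX).
- by exfalso; apply: (conn_cut Hc _ aX bX); lia.
- right; split.
    move=> e; apply/negP => Hj.
    have : e \in [set e | joins src tgt e a b] by rewrite inE.
    by move/eqP: k0; rewrite cards_eq0 => /eqP ->; rewrite inE.
  exists X; split.
    move=> M HM; rewrite setIC cntcut.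
    have := cntA M X; have := cntB M X; rewrite (sumPM_A _ HM) (sumPM_B _ HM).
    have := T1S X (subsetT M); rewrite T1k.
    lia.
  do 3!(split => //); first lia.
  have := cardsIC X A; have := cardsIC X (~: A); have := cardAB.
  lia.
Qed.


Definition mult a y := #|[set e | joins src tgt e a y]|.
Definition Nbr a b := [set y | adj src tgt a y] :\ b.

Lemma mult_pos a y : adj src tgt a y -> 0 < mult a y.
Proof. by case/existsP => e He; apply/card_gt0P; exists e; rewrite inE. Qed.

Lemma Nbr_out a b y : a \in A -> y \in Nbr a b -> y \notin A.
Proof. by move=> aA; rewrite !inE => /andP[_]; apply: adj_AB. Qed.

Lemma mult_sum a b : a \in A -> b \notin A ->
  mult a b + \sum_(y in Nbr a b) mult a y = 3.
Proof.
move=> aA bA.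
have H3 : #|[set e in [set: E] | eA e == a]| = 3 by rewrite -degA ?Hcub.
have E1 : [set e in [set: E] | eA e == a] =
    [set e in [set e in [set: E] | eA e == a] | eB e \in b |: Nbr a b].
  apply/setP => e; rewrite !inE; case: (eA e =P a) => //= ea.
  case: eqP => //= _; apply/esym/existsP; exists e; by rewrite joins_AB ?ea ?eqxx ?eB_out.
rewrite E1 cardP big_setU1 /= in H3; last by rewrite setD11.
rewrite -H3; congr (_ + _).
  by apply: eq_card => e; rewrite !inE joins_AB.
apply: eq_bigr => y yN; apply: eq_card => e; rewrite !inE joins_AB //.
exact: Nbr_out yN.
Qed.

Lemma sum_ge a b : \sum_(y in Nbr a b) 1 <= \sum_(y in Nbr a b) mult a y.
Proof.
apply: leq_sum => y; rewrite !inE => /andP[_ H]; exact: mult_pos.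
Qed.

Lemma caseA1 a b c : connected src tgt -> a \in A -> b \notin A -> c != b ->
  2 <= mult a c -> P1 a b \/ P2 a b.
Proof.
move=> Hc aA bA cb m2.
have cN : c \in Nbr a b.
  rewrite !inE cb /=; move: m2; rewrite /mult => /(leq_trans (isT : 0 < 2)).
  by case/card_gt0P => e; rewrite inE => He; apply/existsP; exists e.
have HS := mult_sum aA bA.
have HG := sum_ge a b; rewrite sum1_card in HG.
have HD : 2 + \sum_(y in Nbr a b :\ c) mult a y <= \sum_(y in Nbr a b) mult a y.
  by rewrite (big_setD1 _ cN) /= leq_add2r.
have HG2 : \sum_(y in Nbr a b :\ c) 1 <= \sum_(y in Nbr a b :\ c) mult a y.
  apply: leq_sum => y; rewrite !inE => /andP[_ /andP[_ H]]; exact: mult_pos.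
rewrite sum1_card in HG2.
have HC := cardsD1 c (Nbr a b); rewrite cN in HC.
apply: (cutlem (X := a |: Nbr a b)) => //.
- by rewrite !inE eqxx.
- rewrite !inE eqxx /= negb_or; apply/andP; split; first by rewrite (neq_AB aA bA).
  done.
- move=> e; rewrite in_setU1 => /orP[/eqP ea|eN]; last by have := Nbr_out aA eN; rewrite eA_in.
  rewrite in_setU1 negb_or => /andP[_ eN].
  rewrite ea eqxx /=; apply/negPn; apply: contra eN => eb; rewrite !inE eb /=.
  by apply/existsP; exists e; rewrite joins_AB ?ea ?eqxx ?eB_out.
- have s1 : (a |: Nbr a b) :&: ~: A \subset Nbr a b.
    apply/subsetP => y; rewrite !inE => /andP[/orP[/eqP ->|-> //]]; by rewrite aA.
  have s2 : 1 <= #|(a |: Nbr a b) :&: A|.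
    by apply/card_gt0P; exists a; rewrite !inE eqxx aA.
  have := subset_leq_card s1.
  rewrite /mult in HS HD HG HG2 *.
  lia.
Qed.


Lemma adj_BA b y : b \notin A -> adj src tgt b y -> y \in A.
Proof.
move=> bA /existsP[e]; rewrite joins_E.
by case/orP => /andP[/eqP E1 /eqP E2]; [move: bA; rewrite -E1 eA_in | rewrite -E2 eA_in].
Qed.

Lemma Nbr_outB a b y : b \notin A -> y \in Nbr b a -> y \in A.
Proof. by move=> bA; rewrite !inE => /andP[_]; apply: adj_BA. Qed.

Lemma multC x y : mult x y = mult y x.
Proof. by apply: eq_card => e; rewrite !inE joinsC. Qed.

Lemma mult_sumB a b : a \in A -> b \notin A ->
  mult b a + \sum_(y in Nbr b a) mult b y = 3.
Proof.
move=> aA bA.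
have H3 : #|[set e in [set: E] | eB e == b]| = 3 by rewrite -degB ?Hcub.
have E1 : [set e in [set: E] | eB e == b] =
    [set e in [set e in [set: E] | eB e == b] | eA e \in a |: Nbr b a].
  apply/setP => e; rewrite !inE; case: (eB e =P b) => //= eb.
  case: eqP => //= _; apply/esym/existsP; exists e.
  by rewrite joinsC joins_AB ?eb ?eqxx ?eA_in.
rewrite E1 cardP big_setU1 /= in H3; last by rewrite setD11.
rewrite -H3; congr (_ + _).
  by apply: eq_card => e; rewrite !inE joinsC joins_AB // andbC.
apply: eq_bigr => y yN; apply: eq_card => e; rewrite !inE joinsC joins_AB ?(Nbr_outB bA yN) //.
by rewrite andbC.
Qed.


Lemma caseHall a b : connected src tgt -> a \in A -> b \notin A ->
  (forall c, c != b -> mult a c <= 1) -> (forall d, d != a -> mult b d <= 1) ->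
  ~ lambda_matchable src tgt a b -> P1 a b \/ P2 a b.
Proof.
move=> Hc aA bA ma mb Hnl.
have m1a : forall y, y \in Nbr a b -> mult a y = 1.
  move=> y yN; have := yN; rewrite !inE => /andP[yb ay].
  by have := mult_pos ay; have := ma y yb; lia.
have m1b : forall y, y \in Nbr b a -> mult b y = 1.
  move=> y yN; have := yN; rewrite !inE => /andP[yb ay].
  by have := mult_pos ay; have := mb y yb; lia.
have cNa : #|Nbr a b| + mult a b = 3.
  rewrite -(mult_sum aA bA) -sum1_card addnC; congr (_ + _).
  by apply: eq_bigr => y yN; rewrite m1a.
have cNb : #|Nbr b a| + mult a b = 3.
  rewrite multC -(mult_sumB aA bA) -sum1_card addnC; congr (_ + _).
  by apply: eq_bigr => y yN; rewrite m1b.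
pose L := A :\: (a |: Nbr b a). pose R := ~: A :\: (b |: Nbr a b).
have sLA : L \subset A by apply: subsetDl.
have sRB : R \subset ~: A by apply: subsetDl.
have aNb : a \notin Nbr b a by rewrite setD11.
have bNa : b \notin Nbr a b by rewrite setD11.
case: (boolP [forall S : {set V}, (S \subset L) ==>
    (#|S| <= #|[set y in R | [exists x in S, adj src tgt x y]]|)]) => [HH|].
- exfalso; apply: Hnl.
  have [f [Hf injf]] : exists f : V -> V, (forall x, x \in L -> (f x \in R) && adj src tgt x (f x)) /\ {in L &, injective f}.
    apply: (@hall V (fun x y => adj src tgt x y) #|L|) => // S sS.
    by move/forallP: HH => /(_ S) /implyP /(_ sS).
  have cRL : #|R| <= #|L|.
    have h1 := cardsID (a |: Nbr b a) A; have h2 := cardsID (b |: Nbr a b) (~: A).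
    rewrite (setIidPr _) in h1; last first.
      by apply/subsetP => x; rewrite in_setU1 => /orP[/eqP ->//|]; apply: Nbr_outB.
    rewrite (setIidPr _) in h2; last first.
      apply/subsetP => x; rewrite in_setU1 => /orP[/eqP ->|]; first by rewrite inE.
      by move/(Nbr_out aA); rewrite inE.
    rewrite !cardsU1 aNb bNa in h1 h2.
    have := cardAB; rewrite /L /R; lia.
  have [M1 [HM1 [HL HR]]] := build sLA sRB cRL Hf injf.
  exists [set e | (eA e == a) || (eB e == b) || (e \in M1)]; split; [|split].
  + rewrite degA // -(Hcub a) degA //; apply: eq_card => e; rewrite !inE.
    by case: (eA e == a); rewrite ?orbT ?andbF.
  + rewrite degB // -(Hcub b) degB //; apply: eq_card => e; rewrite !inE.
    by case: (eB e == b); rewrite ?orbT ?andbF.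
  + move=> v va vb; case vA: (v \in A).
    * rewrite degA //; case vN: (v \in Nbr b a).
        rewrite -(m1b v vN) /mult; apply: eq_card => e; rewrite !inE joinsC joins_AB ?vA //.
        case: (eA e =P v) => [ea|]; rewrite ?andbF ?andbT //.
        rewrite ea (negbTE va) /=; case: (eB e == b) => //=.
        apply/negP => eM; have /andP[eL _] := HM1 e eM.
        by move: eL; rewrite ea in_setD in_setU1 vN orbT.
      rewrite -(HL v); last by rewrite !inE vA andbT negb_or va /=; move: vN; rewrite !inE va /= => ->.
      apply: eq_card => e; rewrite !inE.
      case: (eA e =P v) => [ea|]; rewrite ?andbF ?andbT //.
      rewrite ea (negbTE va) /=; case eb: (eB e == b) => //=.
      have : v \in Nbr b a.
        rewrite !inE va /=; apply/existsP; exists e.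
        by rewrite joinsC joins_AB ?ea ?eb ?eqxx ?vA.
      by rewrite vN.
    * have vB : v \notin A by rewrite vA.
      rewrite degB //; case vN: (v \in Nbr a b).
        rewrite -(m1a v vN) /mult; apply: eq_card => e; rewrite !inE joins_AB //.
        case: (eB e =P v) => [eb|]; rewrite ?andbF ?andbT //.
        rewrite eb (negbTE vb) orbF /=; case: (eA e == a) => //=.
        apply/negP => eM; have /andP[_ eR] := HM1 e eM.
        by move: eR; rewrite eb in_setD in_setU1 vN orbT.
      rewrite -(HR v); last by rewrite !inE vA andbT negb_or vb /=; move: vN; rewrite !inE vb /= => ->.
      apply: eq_card => e; rewrite !inE.
      case: (eB e =P v) => [eb|]; rewrite ?andbF ?andbT //.
      rewrite eb (negbTE vb) orbF /=; case ea: (eA e == a) => //=.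
      have : v \in Nbr a b.
        rewrite !inE vb /=; apply/existsP; exists e.
        by rewrite joins_AB ?ea ?eb ?eqxx.
      by rewrite vN.
- case/forallPn => S; rewrite negb_imply -ltnNge => /andP[sS lt].
  set T := [set y in R | [exists x in S, adj src tgt x y]] in lt.
  have SA : forall x, x \in S -> [&& x \in A, x != a & x \notin Nbr b a].
    move=> x /(subsetP sS); rewrite /L in_setD in_setU1 negb_or.
    by case/andP => /andP[-> ->] ->.
  have TB : forall y, y \in T -> [&& y \notin A, y != b & y \notin Nbr a b].
    move=> y; rewrite inE => /andP[]; rewrite /R in_setD in_setU1 negb_or inE => /andP[/andP[yb yN] yA] _.
    by rewrite yb yN -in_setC /= andbT.
  have aS : a \notin S by apply/negP => /SA; rewrite eqxx andbF.
  apply: (cutlem (X := (a |: S) :|: (T :|: Nbr a b))) => //.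
  + by rewrite !inE eqxx.
  + apply/negP; rewrite !in_setU in_set1 => /or3P[/orP[/eqP ba|/SA]|/TB|].
    * by move: bA; rewrite ba aA.
    * by rewrite (negbTE bA).
    * by rewrite eqxx andbF.
    * by rewrite (negbTE bNa).
  + move=> e; rewrite !in_setU in_set1 !negb_or.
    have HaN : forall y, y \notin Nbr a b -> adj src tgt a y -> y = b.
      by move=> y; rewrite !inE => H H2; move: H; rewrite H2 andbT negbK => /eqP.
    case/or3P => [/orP[/eqP ea|eS]|eT|eN] /and3P[_ eT' eN'].
    * rewrite ea eqxx /=; apply/eqP; apply: HaN eN' _.
      by apply/existsP; exists e; rewrite joins_AB ?ea ?eqxx ?eB_out.
    * rename eN' into eN; rename eT' into eT.
      have ax : adj src tgt (eA e) (eB e) by apply/existsP; exists e; rewrite joins_AB ?eqxx ?eA_in ?eB_out.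
      have eR : eB e \notin R.
        apply: contra eT => eR; rewrite /T inE eR /=; apply/existsP; exists (eA e); by rewrite eS.
      have eb : eB e = b.
        move: eR; rewrite /R in_setD in_setU1 negb_and negbK (negbTE eN) orbF in_setC eB_out orbF.
        by move/eqP.
      exfalso; have /and3P[_ ea eN'] := SA _ eS; case/negP: eN'.
      by rewrite !inE ea /= adjC -eb.
    * by have /and3P[] := TB _ eT; rewrite eA_in.
    * by have := Nbr_out aA eN; rewrite eA_in.
  + have s1 : ((a |: S) :|: (T :|: Nbr a b)) :&: ~: A \subset T :|: Nbr a b.
      apply/subsetP => y; rewrite !in_setI !in_setU in_set1 in_setC.
      case/andP => /or3P[/orP[/eqP ->|/SA/and3P[yA _ _]]|yT|yN] yA'.
      * by rewrite aA in yA'.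
      * by rewrite yA in yA'.
      * by rewrite yT.
      * by rewrite yN orbT.
    have s2 : a |: S \subset ((a |: S) :|: (T :|: Nbr a b)) :&: A.
      apply/subsetP => y; rewrite !in_setI !in_setU in_set1 => /orP[/eqP ->|yS]; first by rewrite eqxx aA.
      by rewrite yS orbT /=; have /and3P[] := SA _ yS.
    have := subset_leq_card s1; have := subset_leq_card s2.
    rewrite cardsU1 aS cardsU.
    rewrite /mult in cNa; lia.
Qed.

End G.

Lemma bipC (V E : finType) (src tgt : E -> V) (A : {set V}) :
  bipartite_on src tgt A -> bipartite_on src tgt (~: A).
Proof. move=> H e; rewrite !inE; by have := H e; case: (src e \in A); case: (tgt e \in A). Qed.

Lemma P2_swap (V E : finType) (src tgt : E -> V) (A : {set V}) a b :
  P2 src tgt (~: A) b a -> P2 src tgt A a b.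
Proof.
case=> Hj [Y [Ht [bY [aY [l1 l2]]]]]; split.
  by move=> e; rewrite joinsC.
exists (~: Y); rewrite cutC setCK; split => //; split; first by rewrite inE.
split; first by rewrite inE negbK.
by rewrite setCK in l1 l2; split.
Qed.

Lemma P2_condii (V E : finType) (src tgt : E -> V) (A : {set V}) a b :
  bipartite_on src tgt A -> cubic src tgt -> a \in A -> b \notin A ->
  P2 src tgt A a b ->
  (forall e, ~~ joins src tgt e a b) /\
    exists X : {set V}, odd #|X| /\ tight src tgt (cut src tgt X) /\
      a \in Xminus A X /\ b \in Xminus A (~: X).
Proof.
move=> Hbip Hcub aA bA [Hj [X [Ht [aX [bX [l1 l2]]]]]]; split => //.
exists X; split.
  have h2 := tight_delta Hbip Hcub Ht l1.
  have h1 : #|X :&: A| + #|X :&: ~: A| = #|X|.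
    by rewrite -(cardsIC A X) setIC [~: A :&: X]setIC.
  by rewrite -h1 h2 addnA addnn oddD odd_double.
split => //; split.
  by rewrite /Xminus l1 inE aX aA.
rewrite /Xminus ltnNge (ltnW l2) /= inE; by rewrite !inE bX.
Qed.

Theorem lemma2p4 (V E : finType) (src tgt : E -> V) (A : {set V}) (a b : V) :
  loopless src tgt ->
  bipartite_on src tgt A ->
  connected src tgt ->
  cubic src tgt ->
  a \in A -> b \in ~: A ->
  let condi :=
    exists e, joins src tgt e a b /\
      (forall e', joins src tgt e' a b -> e' = e) /\
      exists X : {set V}, #|cut src tgt X| = 2 /\ e \in cut src tgt X in
  let condii :=
    (forall e, ~~ joins src tgt e a b) /\
    exists X : {set V}, odd #|X| /\ tight src tgt (cut src tgt X) /\
      a \in Xminus A X /\ b \in Xminus A (~: X) in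
  ~ lambda_matchable src tgt a b <->
    ((condi /\ ~ condii) \/ (~ condi /\ condii)).
Proof.
move=> Hll Hbip Hconn Hcub aA bA' condi condii.
have bA : b \notin A by rewrite inE in bA'.
have excl1 : condi -> ~ condii.
  by case=> e [He _] [Hn _]; move: (Hn e); rewrite He.
have excl2 : condii -> ~ condi.
  by move=> H1 H2; exact: excl1 H2 H1.
have P1i : P1 src tgt a b -> condi by [].
have P2ii : P2 src tgt A a b -> condii by apply: P2_condii.
suff : ~ lambda_matchable src tgt a b <-> condi \/ condii.
  move=> [h1 h2]; split.
    move=> /h1 [c|c]; [left; split => //; exact: excl1 | right; split => //; exact: excl2].
  by case=> [[c _]|[_ c]]; apply: h2; [left|right].
split.
- move=> Hnl.
  case: (boolP [exists c, (c != b) && (1 < mult src tgt a c)]).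
    case/existsP => c /andP[cb m2].
    by case: (caseA1 Hbip Hcub Hconn aA bA cb m2) => [/P1i|/P2ii]; [left|right].
  move/existsPn => Ha.
  case: (boolP [exists d, (d != a) && (1 < mult src tgt b d)]).
    case/existsP => d /andP[da m2].
    have aA' : a \notin ~: A by rewrite inE aA.
    case: (caseA1 (bipC Hbip) Hcub Hconn bA' aA' da m2) => [H|H]; last first.
      by right; apply: P2ii; apply: P2_swap.
    left; case: H => e [He [Hu HX]]; exists e; split; first by rewrite joinsC.
    by split => // e' He'; apply: Hu; rewrite joinsC.
  move/existsPn => Hb.
  have ma : forall c, c != b -> mult src tgt a c <= 1.
    by move=> c cb; have := Ha c; rewrite cb /= -leqNgt.
  have mb : forall d, d != a -> mult src tgt b d <= 1.
    by move=> d da; have := Hb d; rewrite da /= -leqNgt.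
  by case: (caseHall Hbip Hcub Hconn aA bA ma mb Hnl) => [/P1i|/P2ii]; [left|right].
- case=> [[e [He [_ [X [cX eX]]]]]|[_ [X [_ [Ht [aX bX]]]]]] [F HF].
    exact: (fwd1 Hbip Hcub aA bA HF He cX eX).
  move: aX; rewrite /Xminus; case: ifP => lt; rewrite inE => /andP[aX aA2]; last first.
    by rewrite inE aA in aA2.
  have bX' : b \notin X.
    by move: bX; rewrite /Xminus; case: ifP => _; rewrite !inE => /andP[].
  exact: (fwd2 Hbip Hcub aA bA HF Ht aX bX' lt).
Qed.
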